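(* Consider the distributed energy beamforming setting and protocol described in the context, with $M\ge 2$ energy transmitters, channel power gains $\beta_1,\dots,\beta_M>0$, channel phases $\theta_1,\dots,\theta_M\in[-\pi,\pi)$, transmit power $P>0$, and $N\ge1$ feedback intervals per transmitter, and let $\eta=Q_{\mathrm d}/Q^\star$ be the resulting efficiency. Let $0<\hat\eta\le 1$ be a target efficiency. If $$N\ \ge\ \log_2\left(\frac{\pi}{\arccos\left(\sqrt{\hat\eta-\dfrac{(1-\hat\eta)\sum_{m=1}^M\beta_m}{\sum_{i,j=1,\,i\ne j}^M\sqrt{\beta_i\beta_j}}}\right)}\right),$$ then $\eta\ge\hat\eta$.
   Context: Setting: $M$ single-antenna energy transmitters ET$_1,\dots,$ET$_M$ send power to one energy receiver (ER). If ET$_m$ transmits with phase $\phi_m$ (each with power $P$), the harvested power at the ER is $Q(\phi_1,\dots,\phi_M)=P\big|\sum_{m}\sqrt{\beta_m}e^{\mathrm{i}(\phi_m-\theta_m)}\big|^2$, where idle transmitters contribute nothing; the phases $\theta_m$ are unknown to the transmitters. Protocol: ET$_1$ transmits with fixed phase $\bar\phi_1=0$. Then for $m=2,\dots,M$ in turn, with ET$_1,\dots,$ET$_{m-1}$ transmitting with fixed phases $\bar\phi_1,\dots,\bar\phi_{m-1}$ and the others idle, ET$_m$ runs algorithm (A1) below and thereafter transmits with the resulting phase $\bar\phi_m$. Here $Q_m(\phi)=P\big|\sqrt{\beta_m}e^{\mathrm{i}(\phi-\theta_m)}+\sum_{i=1}^{m-1}\sqrt{\beta_i}e^{\mathrm{i}(\bar\phi_i-\theta_i)}\big|^2$.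 Algorithm (A1) for ET$_m$: initialize $\mathcal A^{(1)}=[-\pi,\pi)$, $\psi=0$, $\psi'=-\pi$. For $n=1,\dots,N$: ET$_m$ transmits with phase $\psi$ and then $\psi'$; the ER feeds back one bit indicating whether $Q_m(\psi)>Q_m(\psi')$ (exact measurements). If $Q_m(\psi)>Q_m(\psi')$, set $\mathcal A^{(n+1)}=\mathcal A^{(n)}\setminus\{\theta\in[-\pi,\pi):\cos(\theta-\psi)<\cos(\theta-\psi')\}$, otherwise $\mathcal A^{(n+1)}=\mathcal A^{(n)}\setminus\{\theta\in[-\pi,\pi):\cos(\theta-\psi)>\cos(\theta-\psi')\}$; then set $\psi=\max_{\theta\in\mathcal A^{(n+1)}}\theta$, $\psi'=\min_{\theta\in\mathcal A^{(n+1)}}\theta$. Output $\bar\phi_m=(\psi+\psi')/2$. Finally $Q_{\mathrm d}=Q(\bar\phi_1,\dots,\bar\phi_M)$, $Q^\star=P\big(\sum_{m}\sqrt{\beta_m}\big)^2=P\big(\sum_m\beta_m+\sum_{i\ne j}\sqrt{\beta_i\beta_j}\big)$, and $\eta=Q_{\mathrm d}/Q^\star$. The right-hand side of the condition on $N$ is understood whenever it is well defined (the expression under the square root lies in $[0,1]$). *)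

(* Defs.v *)
From Stdlib Require Import Reals Lra.
Open Scope R_scope.

(* Indices are 0-based: transmitter ET_{m+1} of the paper has index m < M. *)

Fixpoint sumR (n : nat) (f : nat -> R) : R :=
  match n with
  | O => 0
  | S k => sumR k f + f k
  end.

(* Harvested power when transmitters 0..K-1 are active with phases phi
   (the others idle):  P * | sum_{i<K} sqrt(beta_i) e^{i(phi_i - theta_i)} |^2,
   the squared modulus written out as (real part)^2 + (imaginary part)^2. *)
Definition Qpow (P : R) (beta theta phi : nat -> R) (K : nat) : R :=
  P * ((sumR K (fun i => sqrt (beta i) * cos (phi i - theta i))) ^ 2
       + (sumR K (fun i => sqrt (beta i) * sin (phi i - theta i))) ^ 2).

(* One bisection step of algorithm (A1): the current feasible arc is
   [lo, hi] (unwrapped), psi = hi (max), psi' = lo (min). *)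
Definition a1_step (Qm : R -> R) (lh : R * R) : R * R :=
  let (lo, hi) := lh in
  let mid := (lo + hi) / 2 in
  if Rlt_dec (Qm lo) (Qm hi) then (mid, hi) else (lo, mid).

Fixpoint a1_iter (Qm : R -> R) (k : nat) (lh : R * R) : R * R :=
  match k with
  | O => lh
  | S k' => a1_iter Qm k' (a1_step Qm lh)
  end.

(* Algorithm (A1) with N >= 1 feedback intervals: the first interval compares
   psi = 0 with psi' = -pi on the full circle A^(1) = [-pi, pi); the remaining
   arc is [-pi/2, pi/2] or (circularly) [pi/2, 3pi/2].  Then N-1 further
   bisection steps; output the midpoint of the final arc. *)
Definition a1 (Qm : R -> R) (N : nat) : R :=
  let lh1 := if Rlt_dec (Qm (- PI)) (Qm 0) then (- PI / 2, PI / 2)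
             else (PI / 2, 3 * PI / 2) in
  let lh := a1_iter Qm (N - 1) lh1 in
  (fst lh + snd lh) / 2.

(* phases m : the fixed phases of transmitters 0..m-1 after they have run the
   protocol (entries at indices >= m are irrelevant, set to 0). *)
Fixpoint phases (P : R) (beta theta : nat -> R) (N : nat) (m : nat) : nat -> R :=
  match m with
  | O => fun _ => 0
  | S k =>
      let prev := phases P beta theta N k in
      match k with
      | O => prev
      | _ => fun i =>
          if Nat.eqb i k then
            a1 (fun psi => Qpow P beta theta
                             (fun j => if Nat.eqb j k then psi else prev j) (S k)) N
          else prev i
      end
  end.

Definition Qd (P : R) (beta theta : nat -> R) (M N : nat) : R :=
  Qpow P beta theta (phases P beta theta N M) M.

Definition Qstar (P : R) (beta : nat -> R) (M : nat) : R :=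
  P * (sumR M (fun m => sqrt (beta m))) ^ 2.

Definition efficiency (P : R) (beta theta : nat -> R) (M N : nat) : R :=
  Qd P beta theta M N / Qstar P beta M.

Definition log2 (x : R) : R := ln x / ln 2.

Definition cross_sum (beta : nat -> R) (M : nat) : R :=
  sumR M (fun i => sumR M (fun j =>
    if Nat.eqb i j then 0 else sqrt (beta i * beta j))).

Definition radicand (beta : nat -> R) (M : nat) (etahat : R) : R :=
  etahat - (1 - etahat) * sumR M beta / cross_sum beta M.

(* Main.v *)
Require Import Defs.
From Stdlib Require Import Reals Lra Lia.
Open Scope R_scope.

Lemma sumR_ext n f g : (forall i, (i < n)%nat -> f i = g i) -> sumR n f = sumR n g.
Proof. induction n; simpl; intros H; auto. rewrite IHn by (intros; apply H; lia). rewrite H by lia; auto. Qed.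

Lemma sumR_scal n k f : sumR n (fun i => k * f i) = k * sumR n f.
Proof. induction n; simpl; [ring|rewrite IHn; ring]. Qed.

Lemma sumR_scal_r n k f : sumR n (fun i => f i * k) = sumR n f * k.
Proof. induction n; simpl; [ring|rewrite IHn; ring]. Qed.

Lemma sumR_minus n f g : sumR n (fun i => f i - g i) = sumR n f - sumR n g.
Proof. induction n; simpl; [ring|rewrite IHn; ring]. Qed.

Lemma sumR_nonneg n f : (forall i, (i < n)%nat -> 0 <= f i) -> 0 <= sumR n f.
Proof. induction n; simpl; intros H; [lra|]. pose proof (H n ltac:(lia)). pose proof (IHn ltac:(intros; apply H; lia)). lra. Qed.

Lemma sumR_pos n f : (1 <= n)%nat -> (forall i, (i < n)%nat -> 0 < f i) -> 0 < sumR n f.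
Proof. intros Hn H. destruct n; [lia|]. simpl. pose proof (H n ltac:(lia)).
  assert (0 <= sumR n f) by (apply sumR_nonneg; intros; left; apply H; lia). lra. Qed.

Lemma inner_drop n g i : (i < n)%nat ->
  sumR n (fun j => if Nat.eqb i j then 0 else g j) = sumR n g - g i.
Proof.
  induction n; intros Hi; [lia|]. simpl.
  destruct (Nat.eq_dec i n) as [->|Hne].
  - rewrite Nat.eqb_refl. rewrite (sumR_ext n _ g). ring.
    intros j Hj. assert (n =? j = false)%nat by (apply Nat.eqb_neq; lia). rewrite H; auto.
  - assert (i =? n = false)%nat by (apply Nat.eqb_neq; lia). rewrite H, IHn by lia. ring.
Qed.

Lemma cross_sum_eq beta M : (forall m, (m < M)%nat -> 0 < beta m) ->
  cross_sum beta M = (sumR M (fun i => sqrt (beta i))) ^ 2 - sumR M beta.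
Proof.
  intros Hb. unfold cross_sum.
  rewrite (sumR_ext M _ (fun i => sqrt (beta i) * sumR M (fun j => sqrt (beta j)) - beta i)).
  - rewrite sumR_minus. rewrite (sumR_scal_r M (sumR M (fun j => sqrt (beta j))) (fun i => sqrt (beta i))). ring.
  - intros i Hi.
    rewrite (sumR_ext M _ (fun j => if Nat.eqb i j then 0 else sqrt (beta i) * sqrt (beta j))).
    + rewrite inner_drop by auto. rewrite (sumR_scal M (sqrt (beta i)) (fun j => sqrt (beta j))). rewrite sqrt_sqrt by (left; auto). ring.
    + intros j Hj. destruct (Nat.eqb i j); auto. apply sqrt_mult; left; auto.
Qed.

Lemma cross_pos a n : (2 <= n)%nat -> (forall i, (i < n)%nat -> 0 < a i) ->
  0 < (sumR n a) ^ 2 - sumR n (fun i => a i * a i).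
Proof.
  induction n; intros Hn Ha; [lia|].
  destruct (Nat.eq_dec n 1) as [->|Hne].
  - simpl. pose proof (Ha 0%nat ltac:(lia)). pose proof (Ha 1%nat ltac:(lia)). nra.
  - simpl. pose proof (IHn ltac:(lia) ltac:(intros; apply Ha; lia)).
    pose proof (Ha n ltac:(lia)).
    assert (0 <= sumR n a) by (apply sumR_nonneg; intros; left; apply Ha; lia).
    simpl in H. nra.
Qed.

Lemma cos_close d e : -e <= d <= e -> e <= PI -> cos e <= cos d.
Proof.
  intros H1 H2. destruct (Rle_dec 0 d).
  - apply cos_decr_1; lra.
  - rewrite <- (cos_neg d). apply cos_decr_1; lra.
Qed.

Lemma a1_step_inv Q A B x lo hi : 0 < B -> (forall p, Q p = A + B * cos (p - x)) ->
  lo <= x <= hi -> hi - lo <= PI ->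
  fst (a1_step Q (lo, hi)) <= x <= snd (a1_step Q (lo, hi)) /\
  snd (a1_step Q (lo, hi)) - fst (a1_step Q (lo, hi)) = (hi - lo) / 2.
Proof.
  intros HB HQ Hx HL. unfold a1_step. rewrite !HQ.
  replace (lo - x) with (- (x - lo)) by ring. rewrite cos_neg.
  destruct (Rlt_dec _ _) as [h|h]; simpl.
  - assert (cos (x - lo) < cos (hi - x)).
    { apply (Rmult_lt_reg_l B); lra. }
    assert (hi - x < x - lo) by (apply cos_decreasing_0; lra). lra.
  - assert (cos (hi - x) <= cos (x - lo)).
    { apply Rnot_lt_le in h. apply (Rmult_le_reg_l B); lra. }
    assert (x - lo <= hi - x) by (apply cos_decr_0; lra). lra.
Qed.

Lemma a1_iter_inv Q A B x k : 0 < B -> (forall p, Q p = A + B * cos (p - x)) ->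
  forall lo hi, lo <= x <= hi -> hi - lo <= PI ->
  fst (a1_iter Q k (lo, hi)) <= x <= snd (a1_iter Q k (lo, hi)) /\
  snd (a1_iter Q k (lo, hi)) - fst (a1_iter Q k (lo, hi)) = (hi - lo) / 2 ^ k.
Proof.
  intros HB HQ. induction k; intros lo hi Hx HL.
  - simpl. split; [lra|field].
  - change (a1_iter Q (S k) (lo, hi)) with (a1_iter Q k (a1_step Q (lo, hi))).
    pose proof (a1_step_inv Q A B x lo hi HB HQ Hx HL) as [H1 H2].
    destruct (a1_step Q (lo, hi)) as [l h]. simpl in *.
    assert (0 < 2 ^ k) by (apply pow_lt; lra).
    destruct (IHk l h) as [H3 H4]; try lra.
    split; auto. rewrite H4, H2. simpl. field. lra.
Qed.

Lemma a1_spec Q A B x N : 0 < B -> (forall p, Q p = A + B * cos (p - x)) ->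
  (1 <= N)%nat -> -2 * PI <= x < 2 * PI ->
  cos (PI / 2 ^ N) <= cos (a1 Q N - x).
Proof.
  intros HB HQ HN Hxr. pose proof PI_RGT_0 as Hpi.
  assert (Hred : exists x', (forall p, cos (p - x') = cos (p - x)) /\
            - (PI / 2) < x' <= 3 * (PI / 2)).
  { destruct (Rle_dec x (- (PI / 2))).
    - exists (x + 2 * PI). split; [|lra]. intros p.
      rewrite <- (cos_period (p - (x + 2 * PI)) 1). f_equal. change (INR 1) with 1. ring.
    - destruct (Rle_dec x (3 * (PI / 2))).
      + exists x. split; [auto|lra].
      + exists (x - 2 * PI). split; [|lra]. intros p.
        rewrite <- (cos_period (p - x) 1). f_equal. change (INR 1) with 1. ring. }
  destruct Hred as [x' [Hc Hx']].
  assert (HQ' : forall p, Q p = A + B * cos (p - x')) by (intros; rewrite Hc; auto).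
  assert (Hlh1 : let lh1 := if Rlt_dec (Q (- PI)) (Q 0) then (- PI / 2, PI / 2)
             else (PI / 2, 3 * PI / 2) in
          fst lh1 <= x' <= snd lh1 /\ snd lh1 - fst lh1 = PI).
  { rewrite !HQ'. replace (- PI - x') with (- (x' + PI)) by ring.
    rewrite cos_neg, neg_cos. replace (0 - x') with (- x') by ring. rewrite cos_neg.
    destruct (Rlt_dec _ _) as [h|h]; simpl.
    - assert (0 < cos x') by (apply (Rmult_lt_reg_l B); lra).
      destruct (Rlt_dec x' (PI / 2)); [lra|].
      exfalso. assert (cos x' <= 0); [|lra].
      destruct (Req_dec x' (PI / 2)) as [->|]; [rewrite cos_PI2; lra|].
      destruct (Req_dec x' (3 * (PI / 2))) as [->|]; [rewrite cos_3PI2; lra|].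
      left; apply cos_lt_0; lra.
    - assert (cos x' <= 0) by (apply Rnot_lt_le in h; apply (Rmult_le_reg_l B); lra).
      destruct (Rlt_dec x' (PI / 2)); [|lra].
      exfalso. assert (0 < cos x') by (apply cos_gt_0; lra). lra. }
  unfold a1. simpl in Hlh1.
  destruct (if Rlt_dec (Q (- PI)) (Q 0) then (- PI / 2, PI / 2) else (PI / 2, 3 * PI / 2))
    as [lo hi]. simpl in Hlh1. destruct Hlh1 as [Hin Hlen].
  destruct (a1_iter_inv Q A B x' (N - 1) HB HQ' lo hi Hin ltac:(lra)) as [H1 H2].
  set (p := a1_iter Q (N - 1) (lo, hi)) in *.
  replace (a1_iter Q (N - 1) (lo, hi)) with p by reflexivity.
  assert (E : 2 ^ N = 2 * 2 ^ (N - 1)).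
  { destruct N; [lia|]. simpl. replace (N - 0)%nat with N by lia. ring. }
  assert (0 < 2 ^ (N - 1)) by (apply pow_lt; lra).
  assert (1 <= 2 ^ (N - 1)) by (apply pow_R1_Rle; lra).
  rewrite <- Hc.
  apply cos_close.
  - rewrite E. rewrite Hlen in H2. split.
    + assert (H4 : snd p - fst p = PI / (2 ^ (N - 1))) by exact H2.
      assert ((fst p + snd p) / 2 - x' >= - (PI / (2 * 2 ^ (N - 1)))); [|lra].
      replace (PI / (2 * 2 ^ (N - 1))) with ((snd p - fst p) / 2) by (rewrite H4; field; lra). lra.
    + replace (PI / (2 * 2 ^ (N - 1))) with ((snd p - fst p) / 2) by (rewrite H2; field; lra). lra.
  - rewrite E. apply (Rmult_le_reg_r (2 * 2 ^ (N - 1))); [lra|].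
    unfold Rdiv. rewrite Rmult_assoc, Rinv_l by lra. nra.
Qed.

Definition Xs (beta theta f : nat -> R) K := sumR K (fun i => sqrt (beta i) * cos (f i - theta i)).
Definition Ys (beta theta f : nat -> R) K := sumR K (fun i => sqrt (beta i) * sin (f i - theta i)).
Definition upd (f : nat -> R) (m : nat) (psi : R) := fun j => if Nat.eqb j m then psi else f j.

Lemma Xs_upd beta theta f m psi :
  Xs beta theta (upd f m psi) (S m) = Xs beta theta f m + sqrt (beta m) * cos (psi - theta m).
Proof.
  unfold Xs, upd. simpl. rewrite Nat.eqb_refl. f_equal. apply sumR_ext. intros i Hi.
  assert ((i =? m)%nat = false) by (apply Nat.eqb_neq; lia). rewrite H; auto.
Qed.

Lemma Ys_upd beta theta f m psi :
  Ys beta theta (upd f m psi) (S m) = Ys beta theta f m + sqrt (beta m) * sin (psi - theta m).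
Proof.
  unfold Ys, upd. simpl. rewrite Nat.eqb_refl. f_equal. apply sumR_ext. intros i Hi.
  assert ((i =? m)%nat = false) by (apply Nat.eqb_neq; lia). rewrite H; auto.
Qed.

Lemma polar X Y : 0 < X ^ 2 + Y ^ 2 -> exists al, - PI <= al <= PI /\
  X = sqrt (X ^ 2 + Y ^ 2) * cos al /\ Y = sqrt (X ^ 2 + Y ^ 2) * sin al.
Proof.
  intros H. set (R0 := sqrt (X ^ 2 + Y ^ 2)).
  assert (HR : 0 < R0) by (apply sqrt_lt_R0; auto).
  assert (HR2 : R0 ^ 2 = X ^ 2 + Y ^ 2) by (unfold R0; rewrite pow2_sqrt; lra).
  assert (Hb : -1 <= X / R0 <= 1).
  { split; [apply (Rmult_le_reg_r R0); [lra|] | apply (Rmult_le_reg_r R0); [lra|]];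
    unfold Rdiv; rewrite Rmult_assoc, Rinv_l by lra; nra. }
  assert (Hs : sqrt (1 - (X / R0)²) = Rabs Y / R0).
  { rewrite <- (sqrt_pow2 (Rabs Y / R0)).
    - f_equal. unfold Rsqr. unfold Rdiv. rewrite Rpow_mult_distr.
      rewrite pow2_abs.
      replace (Y ^ 2) with (R0 ^ 2 - X ^ 2) by lra. field. lra.
    - apply Rmult_le_pos; [apply Rabs_pos|left; apply Rinv_0_lt_compat; lra]. }
  destruct (Rle_dec 0 Y).
  - exists (acos (X / R0)). pose proof (acos_bound (X / R0)).
    split; [lra|]. rewrite cos_acos, sin_acos by auto. rewrite Hs, Rabs_right by lra.
    split; field; lra.
  - exists (- acos (X / R0)). pose proof (acos_bound (X / R0)).
    split; [lra|]. rewrite cos_neg, sin_neg, cos_acos, sin_acos by auto.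
    rewrite Hs, Rabs_left by lra. split; field; lra.
Qed.

Lemma expand X Y a R0 al u : X = R0 * cos al -> Y = R0 * sin al ->
  (X + a * cos u) ^ 2 + (Y + a * sin u) ^ 2 = R0 ^ 2 + a ^ 2 + 2 * a * R0 * cos (u - al).
Proof.
  intros -> ->. rewrite cos_minus.
  pose proof (sin2_cos2 al). pose proof (sin2_cos2 u). unfold Rsqr in *.
  transitivity (R0 ^ 2 * (sin al * sin al + cos al * cos al) + a ^ 2 * (sin u * sin u + cos u * cos u)
     + 2 * a * R0 * (cos u * cos al + sin u * sin al)); [ring|].
  rewrite H, H0. ring.
Qed.

Lemma phases_S P beta theta N m : (1 <= m)%nat ->
  phases P beta theta N (S m) = upd (phases P beta theta N m) m
    (a1 (fun psi => Qpow P beta theta (upd (phases P beta theta N m) m psi) (S m)) N).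
Proof. intros Hm. destruct m; [lia|]. reflexivity. Qed.

Lemma Qpow_XY P beta theta f K :
  Qpow P beta theta f K = P * (Xs beta theta f K ^ 2 + Ys beta theta f K ^ 2).
Proof. reflexivity. Qed.

Lemma main_inv M N beta theta P
  (Hbeta : forall m, (m < M)%nat -> 0 < beta m)
  (Htheta : forall m, (m < M)%nat -> - PI <= theta m < PI)
  (HP : 0 < P) (HN : (1 <= N)%nat) (Hc : 0 <= cos (PI / 2 ^ N)) :
  forall m, (1 <= m <= M)%nat ->
  (1 - cos (PI / 2 ^ N) ^ 2) * sumR m beta
    + cos (PI / 2 ^ N) ^ 2 * (sumR m (fun i => sqrt (beta i))) ^ 2
  <= Xs beta theta (phases P beta theta N m) m ^ 2 + Ys beta theta (phases P beta theta N m) m ^ 2.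
Proof.
  set (c := cos (PI / 2 ^ N)).
  assert (Hc1 : c <= 1) by (apply COS_bound). change (0 <= c) in Hc.
  induction m as [|m IH]; intros Hm; [lia|].
  destruct (Nat.eq_dec m 0) as [->|Hm0].
  - unfold Xs, Ys. simpl. pose proof (Hbeta 0%nat ltac:(lia)).
    pose proof (sqrt_sqrt (beta 0%nat) ltac:(lra)).
    pose proof (sin2_cos2 (0 - theta 0%nat)) as Hsc. unfold Rsqr in *.
    set (s := sqrt (beta 0%nat)) in *. set (u := 0 - theta 0%nat) in *.
    right.
    transitivity ((1 - c ^ 2) * beta 0%nat + c ^ 2 * (s * s)); [ring|].
    transitivity ((s * s) * (sin u * sin u + cos u * cos u)); [|ring].
    rewrite Hsc, H0. ring.
  - rewrite phases_S by lia.
    set (prev := phases P beta theta N m) in *.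
    set (Qm := fun psi => Qpow P beta theta (upd prev m psi) (S m)).
    rewrite Xs_upd, Ys_upd.
    set (X := Xs beta theta prev m) in *. set (Y := Ys beta theta prev m) in *.
    set (a := sqrt (beta m)).
    specialize (IH ltac:(lia)).
    set (Sb := sumR m beta) in *. set (Sa := sumR m (fun i => sqrt (beta i))) in *.
    assert (HSb : 0 < Sb) by (apply sumR_pos; [lia|intros; apply Hbeta; lia]).
    assert (HSa : 0 < Sa) by (apply sumR_pos; [lia|intros; apply sqrt_lt_R0, Hbeta; lia]).
    assert (HT : 0 < (1 - c ^ 2) * Sb + c ^ 2 * Sa ^ 2).
    assert (Hcc : c ^ 2 <= 1).
    { replace (c ^ 2) with (c * c) by ring. replace 1 with (1 * 1) by ring.
      apply Rmult_le_compat; lra. }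
    { destruct (Rlt_dec (c ^ 2) 1).
      - assert (0 < (1 - c^2) * Sb) by (apply Rmult_lt_0_compat; lra).
        assert (0 <= c ^ 2 * Sa ^ 2) by (apply Rmult_le_pos; apply pow2_ge_0). lra.
      - assert (0 < c ^ 2 * Sa ^ 2) by (apply Rmult_lt_0_compat; try lra; apply pow_lt; lra).
        assert (0 <= (1 - c^2) * Sb) by (apply Rmult_le_pos; lra). lra. }
    destruct (polar X Y ltac:(lra)) as [al [Hal [HX HY]]].
    set (R0 := sqrt (X ^ 2 + Y ^ 2)) in *.
    assert (HR2 : R0 ^ 2 = X ^ 2 + Y ^ 2) by (unfold R0; rewrite pow2_sqrt; lra).
    assert (HR : 0 < R0) by (apply sqrt_lt_R0; lra).
    assert (Ha : 0 < a) by (apply sqrt_lt_R0, Hbeta; lia).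
    assert (Ha2 : a ^ 2 = beta m) by (unfold a; rewrite pow2_sqrt; [lra|left; apply Hbeta; lia]).
    assert (HQ : forall p, Qm p = P * (R0 ^ 2 + a ^ 2) + (2 * P * a * R0) * cos (p - (theta m + al))).
    { intros p. unfold Qm. rewrite Qpow_XY, Xs_upd, Ys_upd. fold X Y a.
      rewrite (expand X Y a R0 al (p - theta m) HX HY).
      replace (p - (theta m + al)) with (p - theta m - al) by ring. ring. }
    pose proof (Htheta m ltac:(lia)).
    pose proof (a1_spec Qm (P * (R0 ^ 2 + a ^ 2)) (2 * P * a * R0) (theta m + al) N ltac:(repeat apply Rmult_lt_0_compat; lra) HQ HN ltac:(lra)) as Hcos.
    fold c in Hcos.
    rewrite (expand X Y a R0 al _ HX HY).
    replace (a1 Qm N - theta m - al) with (a1 Qm N - (theta m + al)) by ring.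
    assert (Hcc : c ^ 2 <= 1).
    { replace (c ^ 2) with (c * c) by ring. replace 1 with (1 * 1) by ring.
      apply Rmult_le_compat; lra. }
    assert (HRS : c * Sa <= R0).
    { assert (c ^ 2 * Sa ^ 2 <= R0 ^ 2).
      { assert (0 <= (1 - c ^ 2) * Sb) by (apply Rmult_le_pos; lra). lra. }
      assert (0 <= c * Sa) by (apply Rmult_le_pos; lra).
      destruct (Rle_dec (c * Sa) R0) as [|Hn]; auto. exfalso.
      assert (R0 * R0 < (c * Sa) * (c * Sa)) by (apply Rmult_le_0_lt_compat; lra).
      assert ((c * Sa) * (c * Sa) = c ^ 2 * Sa ^ 2) by ring.
      assert (R0 * R0 = R0 ^ 2) by ring. lra. }
    simpl sumR. fold Sb Sa. fold a. rewrite <- Ha2.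
    assert (a * R0 * c <= a * R0 * cos (a1 Qm N - (theta m + al))) by
      (apply Rmult_le_compat_l; [apply Rmult_le_pos|]; lra).
    assert (a * c * (c * Sa) <= a * c * R0) by (apply Rmult_le_compat_l; [apply Rmult_le_pos|]; lra).
    assert (a * c * R0 = a * R0 * c) by ring.
    apply (Rle_trans _ ((1 - c ^ 2) * Sb + c ^ 2 * Sa ^ 2 + a ^ 2 + 2 * (a * c * (c * Sa)))).
    { right; ring. }
    apply (Rle_trans _ (R0 ^ 2 + a ^ 2 + 2 * (a * R0 * cos (a1 Qm N - (theta m + al))))).
    { lra. }
    right; ring.
Qed.

Theorem corollary1 (M N : nat) (beta theta : nat -> R) (P etahat : R)
  (HM : (2 <= M)%nat)
  (Hbeta : forall m, (m < M)%nat -> 0 < beta m)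
  (Htheta : forall m, (m < M)%nat -> - PI <= theta m < PI)
  (HP : 0 < P)
  (HN : (1 <= N)%nat)
  (Heta : 0 < etahat <= 1)
  (Hwd : 0 <= radicand beta M etahat < 1)
  (HNbound : log2 (PI / acos (sqrt (radicand beta M etahat))) <= INR N) :
  etahat <= efficiency P beta theta M N.
Proof.
  pose proof PI_RGT_0 as Hpi.
  assert (HCeq := cross_sum_eq beta M Hbeta).
  set (r := radicand beta M etahat) in *.
  set (sa := sumR M (fun i => sqrt (beta i))) in *.
  set (sb := sumR M beta) in *.
  set (C := cross_sum beta M) in *.
  assert (HCpos : 0 < C).
  { rewrite HCeq. pose proof (cross_pos (fun i => sqrt (beta i)) M HM
       ltac:(intros; apply sqrt_lt_R0, Hbeta; auto)) as Hc.
    cbv beta in Hc. rewrite (sumR_ext M (fun i => sqrt (beta i) * sqrt (beta i)) beta) in Hc. exact Hc.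
    intros i Hi. apply sqrt_sqrt. left; auto. }
  assert (Hsr0 : 0 <= sqrt r) by apply sqrt_pos.
  assert (Hsr1 : sqrt r < 1) by (rewrite <- sqrt_1; apply sqrt_lt_1_alt; lra).
  set (u := acos (sqrt r)) in *.
  assert (Hcu : cos u = sqrt r) by (apply cos_acos; lra).
  assert (Hu : 0 <= u <= PI) by apply acos_bound.
  assert (Hu0 : 0 < u).
  { destruct (Req_dec u 0) as [E|]; [|lra]. rewrite E, cos_0 in Hcu. lra. }
  assert (Hln2 : 0 < ln 2) by (rewrite <- ln_1; apply ln_increasing; lra).
  assert (H2N : 0 < 2 ^ N) by (apply pow_lt; lra).
  assert (Hpu : PI / u <= 2 ^ N).
  { unfold log2 in HNbound.
    assert (ln (PI / u) <= ln (2 ^ N)).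
    { rewrite ln_pow by lra. apply (Rmult_le_reg_r (/ ln 2)).
      apply Rinv_0_lt_compat; lra. rewrite Rmult_assoc, Rinv_r by lra. lra. }
    destruct (Rle_dec (PI / u) (2 ^ N)) as [|Hn]; auto. exfalso.
    assert (ln (2 ^ N) < ln (PI / u)) by (apply ln_increasing; lra). lra. }
  assert (Hpn : PI / 2 ^ N <= u).
  { assert (PI <= 2 ^ N * u).
    { apply (Rmult_le_reg_r (/ u)). apply Rinv_0_lt_compat; lra.
      rewrite Rmult_assoc, Rinv_r by lra. unfold Rdiv in Hpu. lra. }
    apply (Rmult_le_reg_r (2 ^ N)); [lra|]. unfold Rdiv.
    rewrite Rmult_assoc, Rinv_l by lra. lra. }
  assert (Hpn0 : 0 <= PI / 2 ^ N) by (unfold Rdiv; apply Rmult_le_pos; [lra|left; apply Rinv_0_lt_compat; lra]).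
  set (c := cos (PI / 2 ^ N)).
  assert (Hcr : sqrt r <= c) by (rewrite <- Hcu; apply cos_decr_1; lra).
  assert (Hc2 : r <= c ^ 2).
  { rewrite <- (pow2_sqrt r) by lra. replace (sqrt r ^ 2) with (sqrt r * sqrt r) by ring.
    replace (c ^ 2) with (c * c) by ring. apply Rmult_le_compat; lra. }
  pose proof (main_inv M N beta theta P Hbeta Htheta HP HN ltac:(fold c; lra) M ltac:(lia)) as HI.
  fold c sa sb in HI.
  assert (HrC : r * C = etahat * C - (1 - etahat) * sb).
  { unfold r, radicand. fold sb C. field. lra. }
  assert (HT : etahat * sa ^ 2 <= (1 - c ^ 2) * sb + c ^ 2 * sa ^ 2).
  { assert (0 <= (c ^ 2 - r) * C) by (apply Rmult_le_pos; lra).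
    assert (E1 : (c ^ 2 - r) * C = c ^ 2 * sa ^ 2 - c ^ 2 * sb - r * C) by (rewrite HCeq; ring).
    assert (E2 : etahat * sa ^ 2 = etahat * C + etahat * sb) by (rewrite HCeq; ring).
    lra. }
  assert (HQs : 0 < Qstar P beta M).
  { unfold Qstar. fold sa. apply Rmult_lt_0_compat; auto. apply pow_lt.
    apply sumR_pos; [lia|intros; apply sqrt_lt_R0, Hbeta; auto]. }
  unfold efficiency. unfold Rdiv. apply (Rmult_le_reg_r (Qstar P beta M)); auto.
  rewrite Rmult_assoc, Rinv_l, Rmult_1_r by lra.
  unfold Qd, Qstar. rewrite Qpow_XY. fold sa.
  assert (etahat * sa ^ 2 <= Xs beta theta (phases P beta theta N M) M ^ 2 +
          Ys beta theta (phases P beta theta N M) M ^ 2) by lra.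
  assert (P * (etahat * sa ^ 2) <= P * (Xs beta theta (phases P beta theta N M) M ^ 2 +
          Ys beta theta (phases P beta theta N M) M ^ 2)) by (apply Rmult_le_compat_l; lra).
  lra.
Qed.
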